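(* A powerful set $S\subseteq 2^E$ is linear if and only if $r_S(X)\le |X|$ for all $X\subseteq E$.
   Context: For a finite set $E$, $S\subseteq 2^E$ is powerful if for every $X\subseteq E$ the number of members of $S$ contained in $X$ is a power of 2. Its rank function is $r_S(X)=\log_2\big(|S|/|\{Y\in S:Y\subseteq E\setminus X\}|\big)$. $S$ is linear if it is a binary linear space, i.e. $\emptyset\in S$ and $S$ is closed under symmetric difference. *)

(* Defs.v *)
From mathcomp Require Import all_boot.
Set Implicit Arguments. Unset Strict Implicit. Unset Printing Implicit Defensive.

Definition nbelow (E : finType) (S : {set {set E}}) (X : {set E}) : nat :=
  #|[set Y in S | Y \subset X]|.

Definition powerful (E : finType) (S : {set {set E}}) : Prop :=
  forall X : {set E}, exists k : nat, nbelow S X = 2 ^ k.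

(* For a powerful S both counts are powers of 2 and the quotient is an
   exact power of 2, so the logarithm is an exact natural number; we
   compute it with trunc_log 2 of the natural-number quotient. *)
Definition rankS (E : finType) (S : {set {set E}}) (X : {set E}) : nat :=
  trunc_log 2 (#|S| %/ nbelow S (~: X)).

Definition symdiff (E : finType) (A B : {set E}) : {set E} :=
  (A :\: B) :|: (B :\: A).

Definition linear_family (E : finType) (S : {set {set E}}) : Prop :=
  set0 \in S /\ forall A B, A \in S -> B \in S -> symdiff A B \in S.

(* Main.v *)
Require Import Defs.
From mathcomp Require Import all_boot all_order all_algebra.
From mathcomp Require Import zify ring lra.
Set Implicit Arguments. Unset Strict Implicit. Unset Printing Implicit Defensive.
Import Order.TTheory GRing.Theory Num.Theory.

Section Pw.
Variable E : finType.
Local Open Scope ring_scope.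

Definition sgn (n : nat) : int := (-1) ^+ n.

Lemma sgnD m n : sgn (m + n) = sgn m * sgn n.
Proof. by rewrite /sgn exprD. Qed.

Lemma sgn_double k : sgn (k.*2) = 1.
Proof. by rewrite /sgn -mul2n exprM sqrrN !expr1n. Qed.

Lemma sgnE n : sgn n = 1 \/ sgn n = -1.
Proof. rewrite /sgn -signr_odd; case: (odd n); [right|left]; by rewrite ?expr1 ?expr0. Qed.

Lemma cardsum (A : {set E}) : #|A| = (\sum_x (x \in A : nat))%N.
Proof. by rewrite -sum1_card big_mkcond /=; apply: eq_bigr => x _; case: (x \in A). Qed.

Lemma card_symdiffI (A B T : {set E}) :
  (#|symdiff A B :&: T| + (#|A :&: B :&: T|).*2 = #|A :&: T| + #|B :&: T|)%N.
Proof.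
rewrite -addnn !cardsum -!big_split /=; apply: eq_bigr => x _.
rewrite /symdiff !inE; by case: (x \in A); case: (x \in B); case: (x \in T).
Qed.

Lemma sgn_symdiff (A B T : {set E}) :
  sgn #|symdiff A B :&: T| = sgn #|A :&: T| * sgn #|B :&: T|.
Proof. by rewrite -sgnD -card_symdiffI sgnD sgn_double mulr1. Qed.

Lemma symdiffK (A B : {set E}) : symdiff (symdiff A B) B = A.
Proof.
apply/setP => x; rewrite /symdiff !inE; by case: (x \in A); case: (x \in B).
Qed.

Lemma symdiff_eq0 (A B : {set E}) : (symdiff A B == set0) = (A == B).
Proof.
apply/eqP/eqP => [h|->]; last first.
  by apply/setP => x; rewrite /symdiff !inE; case: (x \in B).
apply/setP => x; move/setP: h => /(_ x); rewrite /symdiff !inE.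
by case: (x \in A); case: (x \in B).
Qed.

Lemma symdiff_sub (T X : {set E}) z : z \in X ->
  (symdiff T [set z] \subset X) = (T \subset X).
Proof.
move=> zX; apply/subsetP/subsetP => h x.
  have := h x; rewrite /symdiff !inE.
  by case: (x =P z) => [->|_]; case: (x \in T) => //= H _; apply: H.
have := h x; rewrite /symdiff !inE.
by case: (x =P z) => [->|_]; case: (x \in T) => //= H _ ; apply: H.
Qed.

Lemma sumsub (Z X : {set E}) :
  \sum_(T in powerset X) sgn #|Z :&: T| =
  if [disjoint Z & X] then (2 ^ #|X|)%:R else 0.
Proof.
case: ifP => hd.
  rewrite (eq_bigr (fun _ => 1)); last first.
    move=> T; rewrite powersetE => hT.
    suff -> : Z :&: T = set0 by rewrite cards0.
    apply/eqP; rewrite setI_eq0; exact: disjointWr hT hd.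
  by rewrite sumr_const card_powerset.
move/negbT: hd; rewrite -setI_eq0 => /set0Pn [z]; rewrite inE => /andP [zZ zX].
set s := \sum_(T in powerset X) _.
have h : s = - s.
  rewrite {1}/s (reindex_inj (h := fun T => symdiff T [set z])); last first.
    by move=> A B /= h; rewrite -(symdiffK A [set z]) h symdiffK.
  rewrite /s -sumrN; apply: eq_big => T.
    by rewrite !powersetE symdiff_sub.
  move=> _; rewrite setIC sgn_symdiff setIC.
  have -> : [set z] :&: Z = [set z] by apply/setIidPl; rewrite sub1set.
  by rewrite cards1 /sgn expr1 mulrN1.
lra.
Qed.

Definition sh (S : {set {set E}}) (T : {set E}) : int :=
  \sum_(Y in S) sgn #|Y :&: T|.

Lemma Fsum S X :
  \sum_(T in powerset X) sh S T = (2 ^ #|X| * nbelow S (~: X))%:R.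
Proof.
rewrite /sh exchange_big /=.
under eq_bigr => Y _ do rewrite sumsub.
rewrite -big_mkcondr /= /nbelow.
rewrite (eq_bigl (fun Y => Y \in [set Y in S | Y \subset ~: X])); last first.
  by move=> Y; rewrite inE disjoints_subset.
by rewrite sumr_const natrM mulr_natr.
Qed.

Lemma inv S Z :
  \sum_T sh S T * sgn #|Z :&: T| = (2 ^ #|E| * (Z \in S))%:R.
Proof.
rewrite /sh.
rewrite (eq_bigr (fun T => \sum_(Y in S) sgn #|symdiff Y Z :&: T|)); last first.
  by move=> T _; rewrite mulr_suml; apply: eq_bigr => Y _; rewrite sgn_symdiff.
rewrite exchange_big /=.
have e : forall Y, \sum_T sgn #|symdiff Y Z :&: T| = if Y == Z then (2 ^ #|E|)%:R else 0.
  move=> Y; rewrite (eq_bigl (fun T => T \in powerset setT)); last first.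
    by move=> T; rewrite powersetE subsetT.
  by rewrite sumsub cardsT -symdiff_eq0 -setI_eq0 setIT.
under eq_bigr => Y _ do rewrite e.
rewrite -big_mkcondr /=.
case: (boolP (Z \in S)) => hZ.
  by rewrite (big_pred1 Z) ?muln1 // => Y; rewrite /= andbC; case: eqP => // ->.
rewrite big_pred0 ?muln0 // => Y; case: eqP => [->|]; by rewrite ?(negbTE hZ) ?andbF.
Qed.

Lemma sgn_le1 n : sgn n <= 1.
Proof. by case: (sgnE n) => ->. Qed.

Lemma sh_le (S : {set {set E}}) T : sh S T <= #|S|%:R.
Proof.
rewrite /sh -[X in _ <= X]mul1r [1 * _]mulr_natr -sumr_const.
by apply: ler_sum => Y _; apply: sgn_le1.
Qed.

Lemma sh_gt (S : {set {set E}}) T : set0 \in S -> - (#|S|%:R) < sh S T.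
Proof.
move=> h0; rewrite -subr_gt0 opprK /sh.
rewrite -[X in _ + X]mul1r [1 * _]mulr_natr -sumr_const -big_split /=.
rewrite (bigD1 set0) //= set0I cards0 /sgn expr0.
apply: (@lt_le_trans _ _ (1 + 1)); first by [].
rewrite lerDl; apply: sumr_ge0 => Y _.
by rewrite -/(sgn _); case: (sgnE #|Y :&: T|) => ->; rewrite ?addNr.
Qed.

Lemma dich (S : {set {set E}}) : set0 \in S ->
  (forall X, exists k : int, \sum_(T in powerset X) sh S T = #|S|%:R * k) ->
  forall T, sh S T = 0 \/ sh S T = #|S|%:R.
Proof.
move=> h0 hF X; have [m] := ubnP #|X|; elim: m X => // m IH X hX.
have [k hk] := hF X.
rewrite (bigD1 X) /= in hk; last by rewrite powersetE subxx.
have [k' hk'] : exists k', \sum_(T in powerset X | T != X) sh S T = #|S|%:R * k'.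
  apply: (big_ind (fun s => exists k', s = #|S|%:R * k')).
  - by exists 0; rewrite mulr0.
  - by move=> a b [ka ->] [kb ->]; exists (ka + kb); rewrite mulrDr.
  - move=> T /andP [hT hne].
    have /proper_card hc : T \proper X by rewrite properEneq hne -powersetE.
    case: (IH T) => [|->|->].
    + by apply: leq_trans hc _.
    + by exists 0; rewrite mulr0.
    + by exists 1; rewrite mulr1.
have e : sh S X = #|S|%:R * (k - k') by rewrite mulrBr -hk hk' addrK.
have hlo := sh_gt X h0.
have hhi := sh_le S X.
have hN : (0 : int) < #|S|%:R by rewrite ltr0n card_gt0; apply/set0Pn; exists set0.
move: hlo hhi hN; rewrite e; set n : int := #|S|%:R; set j := k - k'.
move=> h1 h2 h3.
have : j = 0 \/ j = 1 by nia.
by case=> ->; rewrite ?mulr0 ?mulr1; [left|right].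
Qed.

Lemma sh0 (S : {set {set E}}) : sh S set0 = #|S|%:R.
Proof.
rewrite /sh (eq_bigr (fun _ => 1)); first by rewrite sumr_const.
by move=> Y _; rewrite setI0 cards0.
Qed.

Lemma sh_pos (S : {set {set E}}) : linear_family S -> forall T, 0 <= sh S T.
Proof.
move=> [_ hlin] T.
case: (boolP [exists A in S, odd #|A :&: T|]) => [/exists_inP [A hA hodd]|hno].
  have e : sh S T = - sh S T.
    rewrite {1}/sh (reindex_inj (h := fun Y => symdiff Y A)); last first.
      by move=> Y1 Y2 /= h; rewrite -(symdiffK Y1 A) h symdiffK.
    rewrite /sh -sumrN; apply: eq_big => Y.
      apply/idP/idP => hY; last exact: hlin.
      by rewrite -(symdiffK Y A); apply: hlin.
    move=> _; rewrite sgn_symdiff /sgn -(signr_odd _ #|A :&: T|) hodd expr1 mulrN1 //.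
  have -> : sh S T = 0 by lra.
  by [].
apply: sumr_ge0 => Y hY; rewrite /sgn -signr_odd.
move: hno => /exists_inP hno.
case: (boolP (odd #|Y :&: T|)) => h; last by rewrite expr0.
by exfalso; apply: hno; exists Y.
Qed.
End Pw.

Lemma rank_le (N f k : nat) : (0 < f)%N -> (N <= 2 ^ k * f)%N -> (trunc_log 2 (N %/ f) <= k)%N.
Proof.
move=> hf hN.
have hd : (N %/ f <= 2 ^ k)%N by rewrite -(mulnK (2 ^ k) hf); apply: leq_div2r.
case: (posnP (N %/ f)) => [->|hp]; first by rewrite trunc_log0.
rewrite -(@leq_exp2l 2) //; apply: leq_trans hd; exact: trunc_logP.
Qed.

Lemma rank_dvd (a b k : nat) : (b <= a)%N -> (trunc_log 2 (2 ^ a %/ 2 ^ b) <= k)%N ->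
  exists m, (2 ^ k * 2 ^ b = 2 ^ a * 2 ^ m)%N.
Proof.
move=> hba; rewrite -expnB // trunc_expnK // => h.
exists (k + b - a); rewrite -!expnD; congr (2 ^ _); lia.
Qed.

Theorem corollary3 (E : finType) (S : {set {set E}}) :
  powerful S ->
  (linear_family S <-> forall X : {set E}, rankS S X <= #|X|).
Proof.
move=> hp.
have h0 : set0 \in S.
  have [k hk] := hp set0.
  have : (0 < nbelow S set0)%N by rewrite hk expn_gt0.
  rewrite /nbelow card_gt0 => /set0Pn [Y]; rewrite inE subset0 => /andP [hY /eqP hY0].
  by rewrite -hY0.
have [a ha] := hp setT.
have hN : #|S| = (2 ^ a)%N.
  rewrite -ha /nbelow; apply: eq_card => Y; by rewrite inE subsetT andbT.
have hfle : forall X, (nbelow S X <= #|S|)%N.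
  by move=> X; apply: subset_leq_card; apply/subsetP => Y; rewrite inE => /andP [].
split.
- move=> hlin X.
  have hF := Fsum S X.
  rewrite (bigD1 set0) /= in hF; last by rewrite powersetE sub0set.
  have : (#|S|%:R <= (2 ^ #|X| * nbelow S (~: X))%:R :> int)%R.
    rewrite -hF sh0 lerDl; apply: sumr_ge0 => T _; exact: sh_pos.
  rewrite ler_nat => hle.
  apply: rank_le hle.
  by have [b ->] := hp (~: X); rewrite expn_gt0.
- move=> hr; split => // A B hA hB.
  have hdiv : forall X, exists k : int, (\sum_(T in powerset X) sh S T = #|S|%:R * k)%R.
    move=> X; rewrite Fsum.
    have [b hb] := hp (~: X).
    have hba : (b <= a)%N by rewrite -(@leq_exp2l 2) // -hb -hN; apply: hfle.
    have := hr X; rewrite /rankS hb hN => /(rank_dvd hba) [m hm].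
    by exists ((2 ^ m)%:R)%R; rewrite hm natrM.
  have hd := dich h0 hdiv.
  have hone : forall T, (sh S T = #|S|%:R)%R -> forall Y, Y \in S -> (sgn #|Y :&: T| = 1)%R.
    move=> T hT Y hY.
    have Hge : forall Z, Z \in S -> (0 <= 1 - sgn #|Z :&: T|)%R.
      by move=> Z _; rewrite subr_ge0 sgn_le1.
    have Hs : (\sum_(Z in S) (1 - sgn #|Z :&: T|) = 0)%R.
      by rewrite sumrB sumr_const -/(sh S T) hT subrr.
    have := psumr_eq0P Hge Hs hY.
    by move/eqP; rewrite subr_eq0 => /eqP <-.
  have e1 : (\sum_T sh S T * sgn #|symdiff A B :&: T| = \sum_T sh S T * sgn #|set0 :&: T|)%R.
    apply: eq_bigr => T _; case: (hd T) => hT; rewrite hT ?mul0r //.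
    by rewrite sgn_symdiff !hone // set0I cards0.
  move: e1; rewrite !inv h0 => /eqP; rewrite eqr_nat.
  case: (symdiff A B \in S) => //.
  by rewrite muln0 muln1 eq_sym expn_eq0.
Qed.
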